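(* Let $H_0$ be a Hermitian operator on a finite-dimensional Hilbert space with ground-space projection $P_0$, $Q_0=I-P_0$, ground energy $E_0$, $G=Q_0(E_0I-H_0)^{-1}Q_0$, and $V$ Hermitian. Suppose $L$ is an integer with $P_0\Gamma(n)P_0\subseteq\mathbb{C}P_0$ for all $n<L$. Then for any $k\ge1$ and integers $n_1,\dots,n_{2k}\in\mathbb{N}$ with $\sum_{j=1}^{2k}n_j<L$, and any $T_{n_j}\in\Gamma^\star(n_j)$, $j=1,\dots,2k$, we have $T_{n_1}\cdots T_{n_{2k}}P_0\in\mathbb{C}P_0$ and $P_0T_{n_1}\cdots T_{n_{2k}}\in\mathbb{C}P_0$.
   Context: $\Gamma(n)$ is the linear span of operators $Z_0VZ_1V\cdots Z_{n-1}VZ_n$ ($n$ factors of $V$) with each $Z_j\in\{P_0,Q_0\}\cup\{G^m:m\in\mathbb{N}\}$; $\Gamma^\star(n)\subseteq\Gamma(n)$ is the span of such products that additionally satisfy $Z_0Z_n=Z_nZ_0=0$. *)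

(* Defs.v *)
From HB Require Import structures.
From mathcomp Require Import all_boot all_order all_algebra.
Set Implicit Arguments. Unset Strict Implicit. Unset Printing Implicit Defensive.
Import Order.TTheory GRing.Theory Num.Theory.
Local Open Scope ring_scope.

Section Defs.
Variables (C : numClosedFieldType) (d : nat).
Local Notation mx := 'M[C]_d.+1.

Definition adj (M : mx) : mx := map_mx Num.conj (M^T).
Definition herm_op (M : mx) : Prop := adj M = M.

Definition ground_energy (H0 : mx) (E0 : C) : Prop :=
  eigenvalue H0 E0 /\ forall a, eigenvalue H0 a -> E0 <= a.

Definition ground_projection (H0 : mx) (E0 : C) (P0 : mx) : Prop :=
  herm_op P0 /\ P0 * P0 = P0 /\ (P0 :=: eigenspace H0 E0)%MS.

(* G = Q0 (E0 I - H0)^{-1} Q0, the inverse being taken on the range of Q0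
   (reduced resolvent).  Since H0 commutes with P0, E0 I - H0 + P0 is
   invertible and this equals Q0 (E0 I - H0 + P0)^{-1} Q0. *)
Definition reduced_resolvent (H0 : mx) (E0 : C) (P0 : mx) : mx :=
  (1 - P0) * invmx (E0%:M - H0 + P0) * (1 - P0).

(* The letters Z_j : P0, Q0, or G^m with m >= 1 (ZG m stands for G^(m.+1)) *)
Inductive letter := ZP | ZQ | ZG of nat.

Definition eval_letter (P0 G : mx) (z : letter) : mx :=
  match z with ZP => P0 | ZQ => 1 - P0 | ZG m => G ^+ m.+1 end.

Fixpoint word_prod (P0 G V : mx) (z0 : letter) (zs : seq letter) : mx :=
  match zs with
  | [::] => eval_letter P0 G z0
  | z :: zs' => eval_letter P0 G z0 * V * word_prod P0 G V z zs'
  end.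

Definition Gamma (P0 G V : mx) (n : nat) (T : mx) : Prop :=
  exists s : seq (C * (letter * seq letter)),
    all (fun p => size p.2.2 == n) s /\
    T = \sum_(p <- s) p.1 *: word_prod P0 G V p.2.1 p.2.2.

Definition Gamma_star (P0 G V : mx) (n : nat) (T : mx) : Prop :=
  exists s : seq (C * (letter * seq letter)),
    all (fun p =>
       [&& size p.2.2 == n,
           eval_letter P0 G p.2.1 * eval_letter P0 G (last p.2.1 p.2.2) == 0 &
           eval_letter P0 G (last p.2.1 p.2.2) * eval_letter P0 G p.2.1 == 0]) s /\
    T = \sum_(p <- s) p.1 *: word_prod P0 G V p.2.1 p.2.2.

Definition in_CP0 (P0 M : mx) : Prop := exists c : C, M = c *: P0.

End Defs.

(* Main.v *)
Require Import Defs.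
From HB Require Import structures.
From mathcomp Require Import all_boot all_order all_algebra.
Import Order.TTheory GRing.Theory Num.Theory.
Local Open Scope ring_scope.
Set Implicit Arguments.
Unset Strict Implicit.
Section Adj.
Variables (C : numClosedFieldType) (d : nat).
Local Notation mx := 'M[C]_d.+1.
Lemma adjM (A B : mx) : adj (A * B) = adj B * adj A.
Proof. by rewrite /adj -!mulmxE trmx_mul map_mxM. Qed.
Lemma adjZ (a : C) (A : mx) : adj (a *: A) = a^* *: adj A.
Proof. by rewrite /adj linearZ /= map_mxZ. Qed.
End Adj.

Section Span.
Variables (C : numClosedFieldType) (d : nat).
Local Notation mx := 'M[C]_d.+1.

Inductive span (Pr : mx -> Prop) : mx -> Prop :=
| span0 : span Pr 0
| spanS c m M : Pr m -> span Pr M -> span Pr (c *: m + M).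
Arguments span0 {Pr}.
Arguments spanS {Pr} c m M.

Lemma span_add Pr x y : span Pr x -> span Pr y -> span Pr (x + y).
Proof.
elim=> [|c m M Hm HM IH] Hy; first by rewrite add0r.
by rewrite -addrA; apply: spanS => //; apply: IH.
Qed.

Lemma span_scale Pr a x : span Pr x -> span Pr (a *: x).
Proof.
elim=> [|c m M Hm HM IH]; first by rewrite scaler0; apply: span0.
by rewrite scalerDr scalerA; apply: spanS.
Qed.

Lemma span_in (Pr : mx -> Prop) m : Pr m -> span Pr m.
Proof. by move=> H; have := @spanS Pr 1 m 0 H span0; rewrite scale1r addr0. Qed.

Lemma span_mul (Pr1 Pr2 Pr3 : mx -> Prop) x y :
  (forall a b, Pr1 a -> Pr2 b -> span Pr3 (a * b)) ->
  span Pr1 x -> span Pr2 y -> span Pr3 (x * y).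
Proof.
move=> H; elim=> [|c m M Hm HM IH] Hy; first by rewrite mul0r; apply: span0.
rewrite mulrDl -scalerAl; apply: span_add; last exact: IH.
apply: span_scale; elim: Hy => [|c' m' M' Hm' HM' IH']; first by rewrite mulr0; apply: span0.
by rewrite mulrDr -scalerAr; apply: span_add => //; apply: span_scale; apply: H.
Qed.

Lemma span_CP0r (P0 : mx) (Pr : mx -> Prop) M :
  (forall m, Pr m -> in_CP0 P0 (m * P0)) -> span Pr M -> in_CP0 P0 (M * P0).
Proof.
move=> H; elim=> [|c m M' Hm HM [c2 e2]]; first by exists 0; rewrite mul0r scale0r.
have [c1 e1] := H _ Hm.
by exists (c * c1 + c2); rewrite mulrDl -scalerAl e1 e2 scalerA scalerDl.
Qed.

Lemma span_CP0l (P0 : mx) (Pr : mx -> Prop) M :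
  (forall m, Pr m -> in_CP0 P0 (P0 * m)) -> span Pr M -> in_CP0 P0 (P0 * M).
Proof.
move=> H; elim=> [|c m M' Hm HM [c2 e2]]; first by exists 0; rewrite mulr0 scale0r.
have [c1 e1] := H _ Hm.
by exists (c * c1 + c2); rewrite mulrDr -scalerAr e1 e2 scalerA scalerDl.
Qed.
End Span.
Definition isP (z : letter) := if z is ZP then true else false.
Definition qexp (z : letter) := match z with ZG m => m.+1 | _ => 0%N end.
Definition mkQ (i : nat) := if i is j.+1 then ZG j else ZQ.
Definition mulL (x y : letter) := if isP x then ZP else mkQ (qexp x + qexp y).

Fixpoint wmul (z0 : letter) (zs : seq letter) (w0 : letter) (ws : seq letter)
  : letter * seq letter :=
  match zs with
  | [::] => (mulL z0 w0, ws)
  | z :: zs' => (z0, (wmul z zs' w0 ws).1 :: (wmul z zs' w0 ws).2)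
  end.

Lemma wmul_size z0 zs w0 ws : size (wmul z0 zs w0 ws).2 = (size zs + size ws)%N.
Proof. by elim: zs z0 => [|z zs IH] z0 //=; rewrite IH. Qed.

Lemma isP_mulL x y : isP x = isP y -> isP (mulL x y) = isP x.
Proof. rewrite /mulL; case: (isP x) => // _; by case: (qexp x + qexp y)%N. Qed.

Lemma wmul_head z0 zs w0 ws : isP (last z0 zs) = isP w0 ->
  isP (wmul z0 zs w0 ws).1 = isP z0.
Proof. by case: zs => [|z zs] //= H; rewrite isP_mulL. Qed.

Lemma wmul_last z0 zs w0 ws : isP (last z0 zs) = isP w0 ->
  isP (last (wmul z0 zs w0 ws).1 (wmul z0 zs w0 ws).2) = isP (last w0 ws).
Proof.
elim: zs z0 => [|z zs IH] z0 /= H; last exact: IH.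
by case: ws => [|w ws] //=; rewrite isP_mulL.
Qed.

Section Main.
Variables (C : numClosedFieldType) (d : nat).
Local Notation mx := 'M[C]_d.+1.
Variables (P0 R V G : mx).
Hypothesis PP : P0 * P0 = P0.
Hypothesis RP : R * P0 = P0 * R.
Hypothesis Ru : R \is a GRing.unit.
Hypothesis HG : G = (1 - P0) * R.
Local Notation Q0 := (1 - P0).
Local Notation ev := (eval_letter P0 G).
Local Notation wp := (word_prod P0 G V).

Lemma QQ : Q0 * Q0 = Q0.
Proof. by rewrite mulrBl mul1r mulrBr mulr1 PP subrr subr0. Qed.
Lemma PQ : P0 * Q0 = 0.
Proof. by rewrite mulrBr mulr1 PP subrr. Qed.
Lemma QP : Q0 * P0 = 0.
Proof. by rewrite mulrBl mul1r PP subrr. Qed.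
Lemma RnQ n : R ^+ n * Q0 = Q0 * R ^+ n.
Proof.
have c : GRing.comm Q0 R by rewrite /GRing.comm mulrBr mulrBl mulr1 mul1r RP.
by have := commrX n c; rewrite /GRing.comm => ->.
Qed.
Lemma RnP n : R ^+ n * P0 = P0 * R ^+ n.
Proof.
have c : GRing.comm P0 R by rewrite /GRing.comm RP.
by have := commrX n c; rewrite /GRing.comm => ->.
Qed.
Lemma QRmul a b : Q0 * R ^+ a * (Q0 * R ^+ b) = Q0 * R ^+ (a + b).
Proof. by rewrite mulrA -(mulrA Q0) RnQ mulrA QQ -mulrA -exprD. Qed.
Lemma GX n : G ^+ n.+1 = Q0 * R ^+ n.+1.
Proof.
elim: n => [|n IH]; first by rewrite expr1 HG expr1.
by rewrite exprSr IH HG -{2}(expr1 R) QRmul addn1.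
Qed.
Lemma evalQ z : ~~ isP z -> ev z = Q0 * R ^+ qexp z.
Proof. by case: z => //= [_|m _]; [rewrite expr0 mulr1 | rewrite GX]. Qed.
Lemma evalP z : isP z -> ev z = P0.
Proof. by case: z. Qed.
Lemma evQP z : ~~ isP z -> ev z * P0 = 0.
Proof. by move=> H; rewrite evalQ // -mulrA RnP mulrA QP mul0r. Qed.
Lemma evPQ z : ~~ isP z -> P0 * ev z = 0.
Proof. by move=> H; rewrite evalQ // mulrA PQ mul0r. Qed.
Lemma evalmkQ i : ev (mkQ i) = Q0 * R ^+ i.
Proof. by case: i => [|i] /=; [rewrite expr0 mulr1 | rewrite GX]. Qed.

Lemma mulL_eval x y : isP x = isP y -> ev (mulL x y) = ev x * ev y.
Proof.
case Hx: (isP x) => Hy.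
  by case: x Hx => // _; case: y Hy => // _; rewrite /= PP.
by rewrite /mulL Hx evalmkQ evalQ ?Hx // evalQ ?Hy -?Hy // QRmul.
Qed.

Lemma mulL_zero x y : isP x != isP y -> ev x * ev y = 0.
Proof.
case Hx: (isP x); case Hy: (isP y) => // _.
  have -> : x = ZP by case: x Hx.
  by rewrite (@evalQ y) ?Hy //= mulrA PQ mul0r.
have -> : y = ZP by case: y Hy.
by rewrite (@evalQ x) ?Hx //= -mulrA RnP mulrA QP mul0r.
Qed.

Lemma wp_head z0 zs : exists Y, wp z0 zs = ev z0 * Y.
Proof. by case: zs => [|z zs] /=; [exists 1; rewrite mulr1 | eexists; rewrite -mulrA]. Qed.

Lemma wp_last z0 zs : exists Y, wp z0 zs = Y * ev (last z0 zs).
Proof.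
elim: zs z0 => [|z zs IH] z0 /=; first by exists 1; rewrite mul1r.
have [Y ->] := IH z; exists (ev z0 * V * Y); by rewrite !mulrA.
Qed.

Lemma wmulE z0 zs w0 ws : isP (last z0 zs) = isP w0 ->
  wp (wmul z0 zs w0 ws).1 (wmul z0 zs w0 ws).2 = wp z0 zs * wp w0 ws.
Proof.
elim: zs z0 => [|z zs IH] z0 /= H.
  case: ws => [|w ws] /=; rewrite mulL_eval //; by rewrite !mulrA.
by rewrite IH // !mulrA.
Qed.

Definition Wd (a b : bool) (N : nat) (M : mx) := exists z0 zs,
  [/\ size zs = N, isP z0 = a, isP (last z0 zs) = b & M = wp z0 zs].
Definition Cls (p : bool) N M := exists a b, (a != b) = p /\ Wd a b N M.

Lemma Cls_mul p q N N' x y : Cls p N x -> Cls q N' y ->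
  span (Cls (p (+) q) (N + N')) (x * y).
Proof.
move=> [a [b [<- [z0 [zs [Hs Ha Hb ->]]]]]] [c [e [<- [w0 [ws [Hs' Hc He ->]]]]]].
case Hbc: (isP (last z0 zs) == isP w0).
  move/eqP: Hbc => Hbc; apply: span_in.
  exists a, e; split; first rewrite -Hb -Hc Hbc.
    have bx : forall u v w : bool, (u != w) = (u != v) (+) (v != w) by case; case; case.
    exact: bx.
  exists (wmul z0 zs w0 ws).1, (wmul z0 zs w0 ws).2; split.
  - by rewrite wmul_size Hs Hs'.
  - by rewrite wmul_head.
  - by rewrite wmul_last.
  - by rewrite wmulE.
have [Y ->] := wp_last z0 zs; have [Y' ->] := wp_head w0 ws.
by rewrite mulrA -(mulrA Y) mulL_zero ?Hbc // mulr0 mul0r; apply: span0.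
Qed.

Lemma word_cls z0 zs n : size zs = n -> ev z0 * ev (last z0 zs) = 0 ->
  Cls true n (wp z0 zs) \/ wp z0 zs = 0.
Proof.
move=> Hs H0.
have [Y HY] := wp_head z0 zs.
case Ha: (isP z0); case Hb: (isP (last z0 zs)).
- right; rewrite HY (evalP Ha); move: H0; rewrite (evalP Ha) (evalP Hb) PP => ->.
  by rewrite mul0r.
- left; exists true, false; split => //; by exists z0, zs; split.
- left; exists false, true; split => //; by exists z0, zs; split.
- right; rewrite HY.
  move: H0; rewrite evalQ ?Ha // evalQ ?Hb // QRmul => H0.
  have Q00 : Q0 = 0.
    by rewrite -(mulrK (unitrX (qexp z0 + qexp (last z0 zs)) Ru) Q0) H0 mul0r.
  by rewrite ?(@evalQ z0) ?Ha // Q00 !mul0r.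
Qed.

Lemma Gstar_span n T : Gamma_star P0 G V n T -> span (Cls true n) T.
Proof.
move=> [s [Hall ->]]; elim: s Hall => [|p s IH]; first by rewrite big_nil; constructor.
rewrite /= big_cons => /andP[/and3P[/eqP Hs /eqP H1 _] Hall].
have := IH Hall; case: (word_cls Hs H1) => [Hc|->] Hr.
  exact: spanS.
by rewrite scaler0 add0r.
Qed.

Lemma one_span : span (Cls false 0) 1.
Proof.
have -> : (1 : mx) = P0 + Q0 by rewrite addrC subrK.
apply: span_add; apply: span_in.
  by exists true, true; split => //; exists ZP, [::].
by exists false, false; split => //; exists ZQ, [::].
Qed.

Lemma prod_span n (F : 'I_n -> mx) (ns : 'I_n -> nat) :
  (forall j, Gamma_star P0 G V (ns j) (F j)) ->
  span (Cls (odd n) (\sum_(j < n) ns j)%N) (\prod_(j < n) F j).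
Proof.
elim: n F ns => [|n IH] F ns HF; first by rewrite !big_ord0; exact: one_span.
rewrite !big_ord_recr /=.
have -> : ~~ odd n = odd n (+) true by rewrite addbT.
apply: (span_mul (Pr1 := Cls (odd n) (\sum_(i < n) ns (widen_ord (leqnSn n) i))%N)
                 (Pr2 := Cls true (ns ord_max))).
- by move=> a b Ha Hb; apply: Cls_mul.
- by apply: IH => j; apply: HF.
- exact: Gstar_span.
Qed.

Variable L : nat.
Hypothesis hyp : forall n, (n < L)%N -> forall T, Gamma P0 G V n T ->
     in_CP0 P0 (P0 * T * P0).

Lemma cls_fin N m : (N < L)%N -> Cls false N m ->
  in_CP0 P0 (m * P0) /\ in_CP0 P0 (P0 * m).
Proof.
move=> HN [a [b [/negbFE/eqP <- [z0 [zs [Hs Ha Hb ->]]]]]].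
have [Y HY] := wp_head z0 zs; have [Y' HY'] := wp_last z0 zs.
case: a Ha Hb => Ha Hb.
  have e1 : wp z0 zs * P0 = wp z0 zs.
    by rewrite HY' (evalP Hb) -mulrA PP.
  have e2 : P0 * wp z0 zs = wp z0 zs.
    by rewrite HY (evalP Ha) mulrA PP.
  have HG0 : Gamma P0 G V N (wp z0 zs).
    exists [:: (1, (z0, zs))]; split; first by rewrite /= Hs eqxx.
    by rewrite big_seq1 scale1r.
  have := hyp HN HG0; rewrite e2 e1 => H; by split.
split.
  by exists 0; rewrite scale0r HY' -mulrA evQP ?Hb // mulr0.
by exists 0; rewrite scale0r HY mulrA evPQ ?Ha // mul0r.
Qed.

Lemma final k (ns : 'I_(2 * k) -> nat) (Ts : 'I_(2 * k) -> mx) :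
  (\sum_(j < 2 * k) ns j < L)%N ->
  (forall j, Gamma_star P0 G V (ns j) (Ts j)) ->
  in_CP0 P0 ((\prod_(j < 2 * k) Ts j) * P0) /\
  in_CP0 P0 (P0 * \prod_(j < 2 * k) Ts j).
Proof.
move=> hsum hT; have := prod_span hT; rewrite oddM /= => S.
split; [apply: (span_CP0r _ S) | apply: (span_CP0l _ S)] => m Hm;
  by have [] := cls_fin hsum Hm.
Qed.
End Main.
Theorem lemma4 (C : numClosedFieldType) (d : nat) (H0 V P0 : 'M[C]_d.+1)
  (E0 : C) (L : nat) :
  herm_op H0 -> herm_op V ->
  ground_energy H0 E0 -> ground_projection H0 E0 P0 ->
  let G := reduced_resolvent H0 E0 P0 in
  (forall n, (n < L)%N -> forall T, Gamma P0 G V n T ->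
     in_CP0 P0 (P0 * T * P0)) ->
  forall (k : nat) (ns : 'I_(2 * k) -> nat) (Ts : 'I_(2 * k) -> 'M[C]_d.+1),
  (1 <= k)%N ->
  (\sum_(j < 2 * k) ns j < L)%N ->
  (forall j, Gamma_star P0 G V (ns j) (Ts j)) ->
  in_CP0 P0 ((\prod_(j < 2 * k) Ts j) * P0) /\
  in_CP0 P0 (P0 * \prod_(j < 2 * k) Ts j).
Proof.
move=> hH hV hE [hPh [PP eP]] G hyp k ns Ts hk hsum hT.
have /andP[s1 s2] : (P0 == eigenspace H0 E0)%MS by apply/eqmxP.
have PH : P0 * H0 = E0 *: P0.
  by have /eigenspaceP := s1; rewrite mulmxE.
have HP : H0 * P0 = E0 *: P0.
  have e : H0 * P0 = E0^* *: P0.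
    by have := congr1 (@adj C d) PH; rewrite adjM adjZ hH hPh.
  rewrite e; apply/esym.
  by rewrite -{1}PP scalerAl -PH -mulrA e -scalerAr PP.
set A := E0%:M - H0 + P0.
have AP : GRing.comm P0 A.
  rewrite /GRing.comm /A mulrDl mulrBl mulrDr mulrBr -!mulmxE.
  by rewrite mul_scalar_mx mul_mx_scalar !mulmxE HP PH.
have Au : A \in unitmx.
  rewrite -row_free_unit -kermx_eq0 -submx0.
  set K := kermx A.
  have KA : K * A = 0 by rewrite -mulmxE mulmx_ker.
  have AP0 : A * P0 = P0.
    by rewrite /A mulrDl mulrBl -mulmxE mul_scalar_mx mulmxE HP PP subrr add0r.
  have KP : K * P0 = 0 by rewrite -AP0 mulrA KA mul0r.
  have KH : K *m H0 = E0 *: K.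
    move/eqP: KA; rewrite /A mulrDr KP addr0 mulrBr subr_eq0 -!mulmxE mul_mx_scalar.
    by move=> /eqP ->.
  have /submxP [D HD] : (K <= P0)%MS.
    by apply: (submx_trans _ s2); apply/eigenspaceP.
  have K0 : K = 0.
    by rewrite -KP HD -!mulmxE -mulmxA mulmxE PP.
  by rewrite K0 sub0mx.
have RE : invmx A = A^-1 by [].
have RP : invmx A * P0 = P0 * invmx A.
  by rewrite RE; have := commrV AP; rewrite /GRing.comm => ->.
have Ru : invmx A \is a GRing.unit by rewrite RE unitrV.
have HG : G = (1 - P0) * invmx A.
  rewrite /G /reduced_resolvent -mulrA.
  have -> : invmx A * (1 - P0) = (1 - P0) * invmx A.
    by rewrite mulrBr mulrBl mulr1 mul1r RP.
  by rewrite mulrA mulrBl mul1r mulrBr mulr1 PP subrr subr0.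
exact: (final PP RP Ru HG hyp hsum hT).
Qed.
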